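(* Let $\mathcal{S}\subseteq\{0,1\}^N$ be nonempty. The following are equivalent: (1) $\mathcal{S}$ is a lattice (closed under coordinatewise minimum and maximum); (2) $\mathcal{S}$ is the set of minimizers of some submodular function $g:\{0,1\}^N\to\mathbb{R}$; (3) the Hamming distance function $d_{\mathcal{S}}(x)=\min_{y\in\mathcal{S}}\|x-y\|_1$ is submodular.
   Context: A function $g:\{0,1\}^N\to\mathbb{R}$ is submodular if $g(x\vee y)+g(x\wedge y)\le g(x)+g(y)$ for all $x,y$, where $\vee,\wedge$ are coordinatewise max and min. *)

(* Defs.v *)
From mathcomp Require Import all_boot all_order all_algebra.
Set Implicit Arguments. Unset Strict Implicit. Unset Printing Implicit Defensive.
Import Order.TTheory GRing.Theory Num.Theory.
Local Open Scope ring_scope.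

Definition cube (N : nat) := {ffun 'I_N -> bool}.

Definition cjoin N (x y : cube N) : cube N := [ffun i => x i || y i].
Definition cmeet N (x y : cube N) : cube N := [ffun i => x i && y i].

Definition submodular (R : numDomainType) N (g : cube N -> R) : Prop :=
  forall x y : cube N, g (cjoin x y) + g (cmeet x y) <= g x + g y.

Definition is_lattice N (S : {set cube N}) : Prop :=
  forall x y, x \in S -> y \in S -> (cjoin x y \in S) /\ (cmeet x y \in S).

Definition argmin_set (R : numDomainType) N (g : cube N -> R) : {set cube N} :=
  [set x | [forall y, g x <= g y]].

Definition hamming N (x y : cube N) : nat := #|[set i | x i != y i]|.

(* d_S(x) = min_{y in S} ||x - y||_1 ; the seed N is >= every Hamming distance,
   so for nonempty S this is exactly the minimum over S. *)
Definition distS N (S : {set cube N}) (x : cube N) : nat :=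
  \big[minn/N]_(y in S) hamming x y.

(* Main.v *)
Require Import Defs.
From mathcomp Require Import all_boot all_order all_algebra.
From mathcomp Require Import lra.
Import Order.TTheory GRing.Theory Num.Theory.
Set Implicit Arguments. Unset Strict Implicit.

Lemma hamming_le N (x y : cube N) : (hamming x y <= N)%N.
Proof. by rewrite /hamming; apply: leq_trans (max_card _) _; rewrite card_ord. Qed.

Lemma distS_le N (S : {set cube N}) x y : y \in S -> (distS S x <= hamming x y)%N.
Proof.
move=> yS; rewrite /distS -big_filter.
have : y \in [seq i <- index_enum (cube N) | i \in S] by rewrite mem_filter yS mem_index_enum.
elim: [seq _ <- _ | _] => //= a s IH; rewrite inE big_cons => /orP [/eqP <-|/IH H].
  exact: geq_minl.
by rewrite geq_min H orbT.
Qed.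

Lemma distS_ge N (S : {set cube N}) x c :
  (c <= N)%N -> (forall y, y \in S -> c <= hamming x y)%N -> (c <= distS S x)%N.
Proof.
move=> cN H; rewrite /distS; elim/big_ind: _ => //.
  by move=> a b Ha Hb; rewrite leq_min Ha Hb.
Qed.

Lemma distS_att N (S : {set cube N}) x : S != set0 ->
  exists2 y, y \in S & distS S x = hamming x y.
Proof.
case/set0Pn=> y0 y0S.
case: (arg_minnP (fun y => hamming x y) y0S) => y yS Hmin.
exists y => //; apply/eqP; rewrite eqn_leq distS_le //=.
by apply: distS_ge => //; apply: hamming_le.
Qed.

Lemma hamming0 N (x y : cube N) : hamming x y = 0%N -> x = y.
Proof.
move/eqP; rewrite /hamming cards_eq0 => /eqP H; apply/ffunP => i.
apply/eqP; apply/negPn/negP => Hi.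
have : i \in [set i | x i != y i] by rewrite inE.
by rewrite H inE.
Qed.

Lemma hamming_xx N (x : cube N) : hamming x x = 0%N.
Proof. by rewrite /hamming; apply/eqP; rewrite cards_eq0; apply/eqP/setP=> i; rewrite !inE eqxx. Qed.

Lemma distS0 N (S : {set cube N}) x : x \in S -> distS S x = 0%N.
Proof. by move=> xS; apply/eqP; rewrite -leqn0 -(hamming_xx x); apply: distS_le. Qed.

Lemma key N (x y a b : cube N) :
  (hamming (cjoin x y) (cjoin a b) + hamming (cmeet x y) (cmeet a b)
     <= hamming x a + hamming y b)%N.
Proof.
rewrite /hamming -cardsUI -[X in (_ <= X)%N]cardsUI leq_add //; apply: subset_leq_card;
  apply/subsetP => i; rewrite !inE !ffunE;
  by case: (x i); case: (y i); case: (a i); case: (b i).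
Qed.

Local Open Scope ring_scope.

Lemma lat_dist (R : realFieldType) N (S : {set cube N}) : S != set0 ->
  is_lattice S -> submodular (fun x => (distS S x)%:R : R).
Proof.
move=> S0 HL x y /=.
case: (distS_att x S0) => a aS ->; case: (distS_att y S0) => b bS ->.
case: (HL a b aS bS) => jS mS.
rewrite -!natrD ler_nat; apply: leq_trans (key x y a b).
by apply: leq_add; apply: distS_le.
Qed.

Lemma dist_argmin (R : realFieldType) N (S : {set cube N}) : S != set0 ->
  S = argmin_set (fun x => (distS S x)%:R : R).
Proof.
move=> S0; apply/setP => x; rewrite inE.
case xS: (x \in S).
  by apply/esym/forallP => z; rewrite distS0 // ler0n.
apply/esym/negbTE/negP => /forallP H.
case/set0Pn: (S0) => y0 y0S; have := H y0; rewrite /= (distS0 y0S) lern0 => /eqP Hd.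
case: (distS_att x S0) => y yS Hy.
by move: Hd; rewrite Hy => /hamming0 Exy; rewrite Exy yS in xS.
Qed.

Lemma argmin_lat (R : realFieldType) N (S : {set cube N}) (g : cube N -> R) :
  submodular g -> S = argmin_set g -> is_lattice S.
Proof.
move=> Hg -> x y; rewrite !inE => /forallP Hx /forallP Hy.
have := Hg x y; set j := g (cjoin x y); set m := g (cmeet x y) => Hs.
have Hxj := Hx (cjoin x y); have Hym := Hy (cmeet x y).
have Hxm := Hx (cmeet x y); have Hyj := Hy (cjoin x y).
split; apply/forallP => z.
  have := Hx z; rewrite -/j -/m in Hxj Hym Hxm Hyj *; move=> Hz; lra.
have := Hy z; rewrite -/j -/m in Hxj Hym Hxm Hyj *; move=> Hz; lra.
Qed.

Theorem corollary2 (R : realFieldType) (N : nat) (S : {set cube N}) :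
  S != set0 ->
  [/\ (is_lattice S <-> exists g : cube N -> R, submodular g /\ S = argmin_set g),
      (is_lattice S <-> submodular (fun x => (distS S x)%:R : R)) &
      ((exists g : cube N -> R, submodular g /\ S = argmin_set g) <->
        submodular (fun x => (distS S x)%:R : R))].
Proof.
move=> S0.
have A : is_lattice S -> submodular (fun x => (distS S x)%:R : R) := lat_dist R S0.
have B : submodular (fun x => (distS S x)%:R : R) ->
   exists g : cube N -> R, submodular g /\ S = argmin_set g.
  by move=> H; exists (fun x => (distS S x)%:R : R); split => //; apply: dist_argmin.
have C : (exists g : cube N -> R, submodular g /\ S = argmin_set g) -> is_lattice S.
  by case=> g [Hg HS]; apply: argmin_lat Hg HS.
split; split; tauto.
Qed.
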